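(* Let $\pmb x,\pmb y\in\{0,1\}^n$, $\pmb\delta\in\{0,1\}^n$, $\hat{\pmb c},\pmb d\in\mathbb R^n_{\ge0}$ and an integer $\Gamma'\ge0$ be fixed. Then the balancing problem \[\min\Big\{\sum_{i\in[n]}(\hat c_i+d_i\delta_i+d_i\epsilon_i)(x_i-y_i)\ :\ \sum_{i\in[n]}\epsilon_i\le\Gamma',\ \pmb\epsilon\in\{0,1\}^n\Big\}\] has an optimal solution $\pmb\epsilon$ with $\epsilon_i+x_i\le1$ for all $i\in[n]$.
   Context: $[n]=\{1,\dots,n\}$. *)

(* Defs.v *)
From mathcomp Require Import all_boot all_order all_algebra.
From mathcomp Require Import reals.
Set Implicit Arguments. Unset Strict Implicit. Unset Printing Implicit Defensive.
Import Order.TTheory GRing.Theory Num.Theory.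
Local Open Scope ring_scope.

(* 0/1 vectors are represented as 'I_n -> bool; b%:R is 0 or 1. *)

Definition balancing_obj (R : realType) (n : nat)
  (x y delta : 'I_n -> bool) (c d : 'I_n -> R) (eps : 'I_n -> bool) : R :=
  \sum_(i < n) (c i + d i * (delta i)%:R + d i * (eps i)%:R)
                 * ((x i)%:R - (y i)%:R).

Definition balancing_feasible (n : nat) (Gamma' : nat) (eps : 'I_n -> bool) : Prop :=
  (\sum_(i < n) (eps i : nat) <= Gamma')%N.

(* Main.v *)
Require Import Defs.
From mathcomp Require Import all_boot all_order all_algebra.
From mathcomp Require Import reals.
Import Order.TTheory GRing.Theory Num.Theory.
Local Open Scope ring_scope.

Theorem lemma1 (R : realType) (n : nat) (x y delta : 'I_n -> bool)
  (c d : 'I_n -> R) (Gamma' : nat)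
  (hc : forall i, 0 <= c i) (hd : forall i, 0 <= d i) :
  exists eps : 'I_n -> bool,
    [/\ balancing_feasible Gamma' eps,
        (forall eps' : 'I_n -> bool, balancing_feasible Gamma' eps' ->
           balancing_obj x y delta c d eps <= balancing_obj x y delta c d eps')
      & forall i : 'I_n, ((eps i : nat) + (x i : nat) <= 1)%N].
Proof.
pose P := fun f : {ffun 'I_n -> bool} => (\sum_(i < n) (f i : nat) <= Gamma')%N.
pose F := fun f : {ffun 'I_n -> bool} => balancing_obj x y delta c d f.
have P0 : P [ffun=> false] by rewrite /P big1 // => i _; rewrite ffunE.
case: (@arg_minP _ R _ [ffun=> false] P F P0) => e Pe emin.
exists (fun i => e i && ~~ x i); split.
- apply: leq_trans Pe; apply: leq_sum => i _; by case: (e i); case: (x i).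
- move=> eps' Heps'.
  have H1 : P [ffun i => eps' i] by rewrite /P; under eq_bigr do rewrite ffunE.
  have := emin _ H1.
  have -> : F [ffun i => eps' i] = balancing_obj x y delta c d eps'.
    by rewrite /F /balancing_obj; apply: eq_bigr => i _; rewrite ffunE.
  apply: le_trans.
  rewrite /F /balancing_obj; apply: ler_sum => i _.
  case: (x i); case: (y i); case: (e i) => /=; rewrite ?subrr ?mulr0 //;
    rewrite ?subr0 ?mulr1 ?sub0r ?mulrN1 ?lexx //; rewrite lerD2l ?mulr0 // mulr1 //.
- by move=> i; case: (e i); case: (x i).
Qed.
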